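(* Let $m_1,m_2\in\mathcal M$. The class of functions $$\mathscr F(m_1,m_2)=\Big\{(w,y)\mapsto \frac{r_{\gamma_2(w)}(y)}{r_{\gamma_1(w)}(y)}:\ \gamma_1\in\Gamma_{m_1},\ \gamma_2\in\Gamma_{m_2}\Big\}$$ on $\mathscr W\times\mathscr Y$ is a VC-subgraph class with VC dimension at most $2|m_1\vee m_2|+1$.
   Context: $I\subset\mathbb R$ is an interval with nonempty interior; $r_\gamma(y)=\exp(u(\gamma)T(y)-A(\gamma))$ for $\gamma\in I$, $y\in\mathscr Y$, where $T$ is a real measurable function on $\mathscr Y$, $u$ is continuous strictly monotone on $I$, and $A(\gamma)=\log\int e^{u(\gamma)T}d\nu<\infty$ for a measure $\nu$ on $\mathscr Y$. $\mathcal M$ is a set of partitions of $\mathscr W$ into finitely many measurable sets; $|m|$ is the number of sets of $m$; $m_1\vee m_2=\{K_1\cap K_2: K_1\in m_1,K_2\in m_2,K_1\cap K_2\neq\emptyset\}$. For $m\in\mathcal M$, $\Gamma_m$ is a collection of functions $\mathscr W\to I$ that are constant on each set of $m$. *)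

(* Defs.v *)
From HB Require Import structures.
From mathcomp Require Import all_boot all_order all_algebra.
From mathcomp Require Import all_classical all_reals all_analysis.
Set Implicit Arguments. Unset Strict Implicit. Unset Printing Implicit Defensive.
Import Order.TTheory GRing.Theory Num.Theory numFieldNormedType.Exports.
Local Open Scope classical_set_scope.
Local Open Scope ring_scope.

Definition is_partition {d} {W : measurableType d} (m : set (set W)) : Prop :=
  finite_set m /\
  (forall K, m K -> measurable K /\ K !=set0) /\
  (forall K1 K2, m K1 -> m K2 -> K1 `&` K2 !=set0 -> K1 = K2) /\
  \bigcup_(K in m) K = setT.

Definition card_is {T} (m : set (set T)) (n : nat) : Prop := (m #= `I_n)%card.

Definition pjoin {T} (m1 m2 : set (set T)) : set (set T) :=
  [set K | exists K1, exists K2, [/\ m1 K1, m2 K2, K = K1 `&` K2 & K1 `&` K2 !=set0]].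

Definition const_on_blocks {T R} (m : set (set T)) (g : T -> R) : Prop :=
  forall K, m K -> forall w w', K w -> K w' -> g w = g w'.

Definition A_fun {R : realType} {d} {Y : measurableType d}
  (nu : {measure set Y -> \bar R}) (u : R -> R) (T : Y -> R) (g : R) : R :=
  ln (fine (\int[nu]_y (expR (u g * T y))%:E)%E).

Definition r_fun {R : realType} {d} {Y : measurableType d}
  (nu : {measure set Y -> \bar R}) (u : R -> R) (T : Y -> R) (g : R) (y : Y) : R :=
  expR (u g * T y - A_fun nu u T g).

(* VC theory: convention VC dimension = largest size of a shattered finite set. *)
Definition shatters {Z} (C : set (set Z)) (k : nat) (p : 'I_k -> Z) : Prop :=
  injective p /\
  forall J : {set 'I_k}, exists2 S, C S & forall i, S (p i) <-> i \in J.

Definition VC_dim_le {Z} (C : set (set Z)) (V : nat) : Prop :=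
  forall k (p : 'I_k -> Z), shatters C p -> (k <= V)%N.

Definition subgraph {X} {R : realType} (f : X -> R) : set (X * R) :=
  [set z | z.2 < f z.1].

Definition VC_subgraph_le {X} {R : realType} (F : set (X -> R)) (V : nat) : Prop :=
  VC_dim_le [set subgraph f | f in F] V.

(* Main.v *)
Require Import Defs.
From HB Require Import structures.
From mathcomp Require Import all_boot all_order all_algebra.
From mathcomp Require Import all_classical all_reals all_analysis.
From mathcomp Require Import ring lra zify.
Import Order.TTheory GRing.Theory Num.Theory numFieldNormedType.Exports.
Local Open Scope classical_set_scope.
Local Open Scope ring_scope.
Lemma key (R : realType) k d (B : 'M[R]_(k,d)) : (d < k)%N ->
  (forall J : {set 'I_k}, exists a : 'cV_d, forall i, 0 < (B *m a) i 0 <-> i \in J) -> False.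
Proof.
move=> hdk hJ.
have aux : forall c : 'rV_k, c *m B = 0 -> forall j0, 0 < c 0 j0 -> False.
  move=> c cB j0 cj0.
  have [a ha] := hJ (finset (fun i => 0 < c 0 i)).
  have : (c *m (B *m a)) 0 0 = 0 by rewrite mulmxA cB mul0mx mxE.
  rewrite !mxE (bigD1 j0) //=.
  have h1 : 0 < c 0 j0 * (B *m a) j0 0.
    by apply: mulr_gt0 => //; apply/ha; rewrite inE.
  have h2 : 0 <= \sum_(i < k | i != j0) c 0 i * (B *m a) i 0.
    apply: sumr_ge0 => i _; case: (ltP 0 (c 0 i)) => hc.
      by apply: mulr_ge0; [exact: ltW| apply/ltW/ha; rewrite inE].
    apply: mulr_le0 => //; rewrite leNgt; apply/negP => /ha; rewrite inE.
    by rewrite ltNge hc.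
  by move=> h; have := ltr_leD h1 h2; rewrite addr0 h ltxx.
have rk : (0 < \rank (kermx B))%N.
  by rewrite mxrank_ker; have := rank_leq_col B; lia.
have [i0 [j0 nz]] : exists i j, kermx B i j != 0.
  apply: contrapT => H; move: rk; suff -> : kermx B = 0 by rewrite mxrank0.
  apply/matrixP => i j; rewrite [RHS]mxE; apply/eqP; apply: contrapT => h; apply: H.
  by exists i, j; apply/negP.
set c := row i0 (kermx B).
have cB : c *m B = 0 by rewrite -row_mul mulmx_ker row0.
have cj : c 0 j0 = kermx B i0 j0 by rewrite mxE.
case: (ltgtP (c 0 j0) 0) => h.
- apply: (aux (- c)) (j0) _; first by rewrite mulNmx cB oppr0.
  by rewrite mxE oppr_gt0.
- exact: (aux c cB j0 h).
- by move: nz; rewrite -cj h eqxx.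
Qed.

Lemma sum_ind1 (R : ringType) n (j0 : 'I_n) (F : 'I_n -> R) (c : R) :
  \sum_j (\row_j' ((j0 == j')%:R * c)) 0 j * (\col_j' F j') j 0 = c * F j0.
Proof.
rewrite (bigD1 j0) //= big1 => [|j hj]; last by rewrite !mxE eq_sym (negbTE hj) mul0r mul0r.
by rewrite !mxE eqxx mul1r addr0.
Qed.

Lemma sum_ind2 (R : ringType) n (j0 : 'I_n) (F : 'I_n -> R) :
  \sum_j (\row_j' ((j0 == j')%:R : R)) 0 j * (\col_j' F j') j 0 = F j0.
Proof.
rewrite (bigD1 j0) //= big1 => [|j hj]; last by rewrite !mxE eq_sym (negbTE hj) mul0r.
by rewrite !mxE eqxx mul1r addr0.
Qed.
Theorem mainTheorem3 (R : realType) (dW dY : measure_display)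
  (W : measurableType dW) (Y : measurableType dY)
  (I : set R) (u : R -> R) (T : Y -> R) (nu : {measure set Y -> \bar R})
  (M : set (set (set W))) (Gamma : set (set W) -> set (W -> R))
  (hI : is_interval I) (hIint : interior I !=set0)
  (hT : measurable_fun setT T)
  (hucont : {within I, continuous u})
  (humono : (forall x y, I x -> I y -> x < y -> u x < u y) \/
            (forall x y, I x -> I y -> x < y -> u y < u x))
  (hA : forall g, I g ->
     (0 < \int[nu]_y (expR (u g * T y))%:E < +oo)%E)
  (hM : forall m, M m -> is_partition m)
  (hGamma : forall m, M m -> forall g, Gamma m g ->
     (forall w, I (g w)) /\ const_on_blocks m g)
  (m1 m2 : set (set W)) (hm1 : M m1) (hm2 : M m2) (n : nat)
  (hn : card_is (pjoin m1 m2) n) :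
  VC_subgraph_le
    [set (fun wy : W * Y => r_fun nu u T (g2 wy.1) wy.2 / r_fun nu u T (g1 wy.1) wy.2)
       | g1 in Gamma m1 & g2 in Gamma m2]
    (2 * n + 1).
Proof.
move=> k p [pinj shat].
rewrite leqNgt; apply/negP => hk.
set w := fun i => (p i).1.1. set y := fun i => (p i).1.2. set t := fun i => (p i).2.
have tpos : forall i, 0 < t i.
  have [S [f [g1 Hg1 [g2 Hg2 <-]] <-] hS] := shat (finset (fun _ => false)).
  move=> i; have := hS i; rewrite inE => -[hh _].
  rewrite ltNge; apply/negP => hti; suff : false by []; apply: hh; rewrite /subgraph /=.
  apply: le_lt_trans hti _; rewrite /r_fun; exact: divr_gt0 (expR_gt0 _) (expR_gt0 _).
have [e [efun einj _]] : exists e, set_bij (pjoin m1 m2) `I_n e by apply/card_set_bijP.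
have cover : forall m, M m -> forall x : W, exists2 K, m K & K x.
  move=> m /hM [_ [_ [_ cov]]] x.
  have : (\bigcup_(K in m) K) x by rewrite cov.
  by case=> K ? ?; exists K.
have blk : forall i, exists j : 'I_n, exists K1 K2,
    [/\ m1 K1, m2 K2, K1 (w i), K2 (w i) & e (K1 `&` K2) = j].
  move=> i; have [K1 h1 x1] := cover _ hm1 (w i); have [K2 h2 x2] := cover _ hm2 (w i).
  have pj : pjoin m1 m2 (K1 `&` K2) by exists K1, K2; split=> //; exists (w i).
  have lt : (e (K1 `&` K2) < n)%N := efun _ pj.
  by exists (Ordinal lt), K1, K2.
have [kap hkap] := choice blk.
have same : forall i i', kap i = kap i' -> exists K1 K2,
    [/\ m1 K1, m2 K2, K1 (w i) /\ K1 (w i') & K2 (w i) /\ K2 (w i')].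
  move=> i i' e12; have [K1 [K2 [a1 a2 a3 a4 a5]]] := hkap i.
  have [K1' [K2' [b1 b2 b3 b4 b5]]] := hkap i'.
  have eq : K1 `&` K2 = K1' `&` K2'.
    apply: einj.
    - by apply: mem_set; exists K1, K2; split=> //; exists (w i).
    - by apply: mem_set; exists K1', K2'; split=> //; exists (w i').
    - by rewrite a5 b5 e12.
  have : (K1' `&` K2') (w i') by split.
  by rewrite -eq => -[c1 c2]; exists K1, K2; split.
have sameg : forall g1 g2, Gamma m1 g1 -> Gamma m2 g2 -> forall i i', kap i = kap i' ->
    g1 (w i) = g1 (w i') /\ g2 (w i) = g2 (w i').
  move=> g1 g2 H1 H2 i i' /same [K1 [K2 [c1 c2 [x1 x1'] [x2 x2']]]].
  have [_ C1] := hGamma _ hm1 _ H1; have [_ C2] := hGamma _ hm2 _ H2.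
  by split; [exact: C1 K1 c1 _ _ x1 x1'| exact: C2 K2 c2 _ _ x2 x2'].
pose Bi i : 'rV[R]_(n + n + 1) := row_mx (row_mx (\row_j ((kap i == j)%:R * T (y i)))
   (\row_j (kap i == j)%:R)) (\row_(j < 1) (- ln (t i))).
pose B := \matrix_i Bi i.
apply: (@key R k (n + n + 1) B); first lia.
move=> J; have [S [f [g1 Hg1 [g2 Hg2 <-]] <-] hS] := shat J.
pose D x := u (g2 x) - u (g1 x).
pose E x := A_fun nu u T (g1 x) - A_fun nu u T (g2 x).
pose al j := if [pick i | kap i == j] is Some i then D (w i) else 0.
pose be j := if [pick i | kap i == j] is Some i then E (w i) else 0.
have alE : forall i, al (kap i) = D (w i) /\ be (kap i) = E (w i).
  move=> i; rewrite /al /be; case: pickP => [i' /eqP hi'|/(_ i)]; last by rewrite eqxx.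
  by rewrite /D /E; have [-> ->] := sameg _ _ Hg1 Hg2 i' i hi'.
pose a := col_mx (col_mx (\col_j al j) (\col_j be j)) (\col_(j < 1) (1:R)).
exists a.
move=> i; rewrite -hS.
have hval : (B *m a) i 0
    = D (w i) * T (y i) + E (w i) - ln (t i).
  have -> : (B *m a) i 0 = (row i B *m a) 0 0 by rewrite -row_mul [RHS]mxE.
  rewrite rowK /Bi /a !mul_row_col !mxE.
  rewrite sum_ind1 sum_ind2 big_ord1 !mxE mulr1.
  have [-> ->] := alE i; by rewrite mulrC.
rewrite hval /subgraph /= /r_fun -expRB.
have tp : t i \is Num.pos by rewrite posrE; exact: tpos.
change ((p i).2) with (t i); rewrite -[X in X < expR _](lnK tp) ltr_expR subr_gt0.
suff -> : D (w i) * T (y i) + E (w i) = u (g2 (p i).1.1) * T (p i).1.2 - A_fun nu u T (g2 (p i).1.1) -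
     (u (g1 (p i).1.1) * T (p i).1.2 - A_fun nu u T (g1 (p i).1.1)) by [].
rewrite /D /E /w /y; ring.
Qed.
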